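(* Let $\mathcal{A}_1,\mathcal{A}_2$ be finite automata each with at most $m$ states, and let $d$ be a multiple of $2\cdot(m^3)!$. If $\mathrm{Adh}_{\preceq_d}(L(\mathcal{A}_1))\cap\mathrm{Adh}_{\preceq_d}(L(\mathcal{A}_2))\neq\emptyset$, then $\mathrm{Adh}_{\preceq_{\ell d}}(L(\mathcal{A}_1))\cap\mathrm{Adh}_{\preceq_{\ell d}}(L(\mathcal{A}_2))\neq\emptyset$ for every $\ell\ge1$.
   Context: For $d\ge1$ define the order $\preceq_d$ on $\Sigma^*$: $u\preceq_d v$ iff one can write $u=u_0u_1\cdots u_n$ and $v=u_0v_1u_1v_2\cdots v_nu_n$ with each $|v_i|$ divisible by $d$ (i.e. $v$ arises from $u$ by inserting factors of length divisible by $d$). This is a WQO. For a WQO $(X,\preceq)$: a set is directed if any two elements have a common upper bound in it; an ideal is a nonempty, downward closed, directed subset; for $L\subseteq X$, the adherence $\mathrm{Adh}_\preceq(L)$ is the set of ideals $I$ with $I\subseteq\downarrow_\preceq(L\cap I)$ (equivalently, $I=\downarrow_\preceq D$ for some directed $D\subseteq L$). *)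

(* Defs.v *)
From mathcomp Require Import all_boot.
Set Implicit Arguments. Unset Strict Implicit. Unset Printing Implicit Defensive.

Section Defs.
Variable S : finType.

(* v = u_0 v_1 u_1 v_2 ... v_n u_n  given us = [u_0;...;u_n], vs = [v_1;...;v_n] *)
Definition interleave (us vs : seq (seq S)) : seq S :=
  head [::] us ++ flatten [seq p.1 ++ p.2 | p <- zip vs (behead us)].

Definition subword_mod (d : nat) (u v : seq S) : Prop :=
  exists (us vs : seq (seq S)),
    [/\ size us = (size vs).+1, u = flatten us, v = interleave us vs
      & all (fun w => d %| size w) vs].

Definition down_closed (le : seq S -> seq S -> Prop) (I : seq S -> Prop) : Prop :=
  forall u v, le u v -> I v -> I u.

Definition directed (le : seq S -> seq S -> Prop) (D : seq S -> Prop) : Prop :=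
  forall u v, D u -> D v -> exists w, [/\ D w, le u w & le v w].

Definition is_ideal (le : seq S -> seq S -> Prop) (I : seq S -> Prop) : Prop :=
  [/\ exists u, I u, down_closed le I & directed le I].

Definition downc (le : seq S -> seq S -> Prop) (L : seq S -> Prop) : seq S -> Prop :=
  fun u => exists2 v, L v & le u v.

Definition in_adherence (le : seq S -> seq S -> Prop) (L : seq S -> Prop)
    (I : seq S -> Prop) : Prop :=
  is_ideal le I /\ forall u, I u -> downc le (fun v => L v /\ I v) u.

Record nfa := NFA {
  nfa_state : finType;
  nfa_init : {set nfa_state};
  nfa_final : {set nfa_state};
  nfa_trans : nfa_state -> S -> {set nfa_state} }.

Definition nfa_reach (A : nfa) (X : {set nfa_state A}) (w : seq S) : {set nfa_state A} :=
  foldl (fun (Y : {set nfa_state A}) a => \bigcup_(q in Y) nfa_trans q a) X w.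

Definition nfa_lang (A : nfa) : seq S -> Prop :=
  fun w => [exists q in nfa_reach (nfa_init A) w, q \in nfa_final A].

End Defs.

(* Main.v *)
Require Import Defs.
From mathcomp Require Import all_boot zify.
From Stdlib Require Import Lia Classical IndefiniteDescription.
Set Implicit Arguments. Unset Strict Implicit. Unset Printing Implicit Defensive.

Section Sub.
Variable S : finType.
Implicit Types u v w : seq S.

Inductive sub (d : nat) : seq S -> seq S -> Prop :=
| sub_nil v : d %| size v -> sub d [::] v
| sub_cons B a u v : d %| size B -> sub d u v -> sub d (a :: u) (B ++ a :: v).

Lemma sub_refl d u : sub d u u.
Proof.
elim: u => [|a u IH]; first by apply: sub_nil; rewrite dvdn0.
by apply: (@sub_cons d [::] a u u) => //; rewrite dvdn0.
Qed.

Lemma sub_size d u v : sub d u v -> exists k, size v = size u + k * d.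
Proof.
elim=> [w Hw | B a u' v' HB _ [k Hk]].
  by exists (size w %/ d); rewrite divnK.
exists (k + size B %/ d); rewrite size_cat /= Hk mulnDl divnK //; lia.
Qed.

Lemma sub_dvd d u v : sub d u v -> d %| size u -> d %| size v.
Proof. by move=> /sub_size [k ->] Hu; rewrite dvdn_add // dvdn_mull. Qed.

Lemma sub_pre d B u v : d %| size B -> sub d u v -> sub d u (B ++ v).
Proof.
move=> HB; case=> [w Hw | B' a u' v' HB' Hs].
  by apply: sub_nil; rewrite size_cat dvdn_add.
rewrite catA; apply: sub_cons => //; by rewrite size_cat dvdn_add.
Qed.

Lemma sub_cat d u U v V : sub d u U -> sub d v V -> sub d (u ++ v) (U ++ V).
Proof.
elim=> [w Hw | B a u' v' HB _ IH] Hv /=.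
  exact: sub_pre.
rewrite -catA /=; apply: sub_cons => //; exact: IH.
Qed.

Lemma sub_consE d a y Y : sub d (a :: y) Y ->
  exists B Y', [/\ Y = B ++ a :: Y', d %| size B & sub d y Y'].
Proof. by move=> H; inversion H; subst; exists B, v. Qed.

Lemma sub_split d x y W : sub d (x ++ y) W ->
  exists X Y, [/\ W = X ++ Y, sub d x X & sub d y Y].
Proof.
elim: x W => [|a x IH] W /=.
  by move=> H; exists [::], W; split => //; apply: sub_nil; rewrite dvdn0.
case/sub_consE=> [B [W' [-> HB HW]]].
have [X [Y [-> H1 H2]]] := IH _ HW.
by exists (B ++ a :: X), Y; split => //; [rewrite -catA | apply: sub_cons].
Qed.

Lemma sub_trans d u v w : sub d u v -> sub d v w -> sub d u w.
Proof.
move=> H; elim: H w => [v' Hv | B a u' v' HB _ IH] w Hvw.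
  by apply: sub_nil; apply: sub_dvd Hvw Hv.
have [W1 [W2 [-> H1 H2]]] := sub_split Hvw.
have [B2 [W3 [-> HB2 H3]]] := sub_consE H2.
rewrite catA; apply: sub_cons; last exact: IH.
by rewrite size_cat dvdn_add // (sub_dvd H1 HB).
Qed.


Lemma sub_mulW d l u v : sub (l * d) u v -> sub d u v.
Proof.
elim=> [w Hw | B a u' v' HB _ IH]; first by apply: sub_nil; apply: dvdn_trans Hw; apply: dvdn_mull.
by apply: sub_cons => //; apply: dvdn_trans HB; apply: dvdn_mull.
Qed.

Lemma subword_sub d u v : subword_mod d u v -> sub d u v.
Proof.
case=> us [vs [Hs -> -> Hall]].
elim: vs us Hs Hall => [|w vs IH] [|u0 us] //= Hs Hall.
  case: us Hs => // _; rewrite /interleave /= !cats0; exact: sub_refl.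
case: us Hs Hall => [|u1 us] //= [Hs] /andP [Hw Hall].
have := IH (u1 :: us) (congr1 succn Hs) Hall.
rewrite /interleave /= => H.
apply: sub_cat; first exact: sub_refl.
rewrite -catA; exact: sub_pre.
Qed.

Lemma sub_subword d u v : sub d u v -> subword_mod d u v.
Proof.
elim=> [w Hw | B a u' v' HB _ [us [vs [Hs Hu Hv Hall]]]].
  exists [:: [::]; [::]], [:: w]; split => //=.
  by rewrite /interleave /= !cats0.
  by rewrite Hw.

case: us Hs Hu Hv => [|u0 us] //= [Hs] Hu Hv.
exists ([::] :: (a :: u0) :: us), (B :: vs); split => //=.
- by rewrite Hs.
- by rewrite Hu.
- by rewrite /interleave /= Hv /interleave /= -catA.
- by rewrite HB.
Qed.


Definition pw d (fs gs : seq (seq S)) :=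
  size fs = size gs /\ forall k, sub d (nth [::] fs k) (nth [::] gs k).

Lemma pw_refl d fs : pw d fs fs.
Proof. by split => // k; apply: sub_refl. Qed.

Lemma pw_trans d fs gs hs : pw d fs gs -> pw d gs hs -> pw d fs hs.
Proof.
move=> [E1 H1] [E2 H2]; split; first by rewrite E1.
by move=> k; apply: sub_trans (H1 k) (H2 k).
Qed.

Lemma sub_flatten d fs gs : pw d fs gs -> sub d (flatten fs) (flatten gs).
Proof.
elim: fs gs => [|f fs IH] [|g gs] [//= E H] /=.
  by apply: sub_refl.
apply: sub_cat; first exact: (H 0).
apply: IH; split; first by case: E.
by move=> k; apply: (H k.+1).
Qed.

Lemma pw_take d n fs gs : pw d fs gs -> pw d (take n fs) (take n gs).
Proof.
move=> [E H]; split; first by rewrite !size_take E.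
move=> k; case: (ltnP k n) => Hk; first by rewrite !nth_take.
rewrite !nth_default; first exact: sub_refl.
  by rewrite size_take; case: ltnP => //; lia.
by rewrite size_take; case: ltnP => //; lia.
Qed.

Lemma pw_drop d n fs gs : pw d fs gs -> pw d (drop n fs) (drop n gs).
Proof.
by move=> [E H]; split; [rewrite !size_drop E | move=> k; rewrite !nth_drop].
Qed.

Lemma sub_nseq d k u v : sub d u v -> sub d (flatten (nseq k u)) (flatten (nseq k v)).
Proof.
move=> H; elim: k => [|k IH] /=; first exact: sub_refl.
exact: sub_cat.
Qed.

Lemma split_flatten d fs W : fs != [::] -> sub d (flatten fs) W ->
  exists gs, flatten gs = W /\ pw d fs gs.
Proof.
elim: fs W => [|f fs IH] W // _ /=.
case: fs IH => [|f' fs] IH.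
  rewrite cats0 => H; exists [:: W]; split; first by rewrite /= cats0.
  by split => // -[|k] //=; apply: sub_refl.
move=> /sub_split [X [Y [-> H1 H2]]].
have [gs [E [Es Hs]]] := IH Y isT H2.
exists (X :: gs); split; first by rewrite /= E.
split; first by rewrite /= -Es.
by case.
Qed.

End Sub.

Section NFA.
Variable S : finType.
Variable A : nfa S.
Notation Q := (nfa_state A).

Lemma reach_cat (X : {set Q}) u v :
  @nfa_reach S A X (u ++ v) = @nfa_reach S A (@nfa_reach S A X u) v.
Proof. by rewrite /nfa_reach foldl_cat. Qed.

Lemma reach_mono (X Y : {set Q}) w :
  X \subset Y -> @nfa_reach S A X w \subset @nfa_reach S A Y w.
Proof.
elim: w X Y => //= a w IH X Y H; apply: IH.
apply/subsetP => q /bigcupP [p pX qp]; apply/bigcupP; exists p => //.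
exact: (subsetP H).
Qed.

Lemma reach_sub1 (X : {set Q}) w q :
  q \in X -> @nfa_reach S A [set q] w \subset @nfa_reach S A X w.
Proof. by move=> H; apply: reach_mono; rewrite sub1set. Qed.

Lemma reach_split (X : {set Q}) w q' : q' \in @nfa_reach S A X w ->
  exists2 q, q \in X & q' \in @nfa_reach S A [set q] w.
Proof.
elim: w X => [|a w IH] X /=.
  by move=> H; exists q' => //; rewrite /nfa_reach /= in_set1.
move=> /IH [q1 /bigcupP [q qX q1q] H]; exists q => //.
apply: (subsetP (reach_sub1 _ _)) H; apply/bigcupP; exists q => //.
by rewrite in_set1.
Qed.

Lemma reach_trans q1 q2 q3 u v : q2 \in @nfa_reach S A [set q1] u ->
  q3 \in @nfa_reach S A [set q2] v -> q3 \in @nfa_reach S A [set q1] (u ++ v).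
Proof. by move=> H1 H2; rewrite reach_cat; apply: (subsetP (reach_sub1 _ H1)). Qed.

Fixpoint rp (q : Q) (fs : seq (seq S)) (vs : seq Q) : bool :=
  match fs, vs with
  | [::], [::] => true
  | f :: fs', q' :: vs' => (q' \in @nfa_reach S A [set q] f) && rp q' fs' vs'
  | _, _ => false
  end.

Lemma rp_size q fs vs : rp q fs vs -> size vs = size fs.
Proof.
by elim: fs q vs => [|f fs IH] q [|q' vs] //= /andP [_ /IH ->].
Qed.

Lemma rp_cat q fs1 fs2 vs1 vs2 : size fs1 = size vs1 ->
  rp q (fs1 ++ fs2) (vs1 ++ vs2) = rp q fs1 vs1 && rp (last q vs1) fs2 vs2.
Proof.
elim: fs1 q vs1 => [|f fs IH] q [|q' vs] //= [E].
by rewrite IH // andbA.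
Qed.

Lemma rp_sound q fs vs : rp q fs vs -> last q vs \in @nfa_reach S A [set q] (flatten fs).
Proof.
elim: fs q vs => [|f fs IH] q [|q' vs] //=.
  by move=> _; rewrite /nfa_reach /= in_set1.
by move=> /andP [H1 /IH H2]; apply: reach_trans H1 H2.
Qed.

Lemma rp_complete q fs q' : q' \in @nfa_reach S A [set q] (flatten fs) ->
  exists vs, rp q fs vs && (last q vs == q').
Proof.
elim: fs q => [|f fs IH] q /=.
  by rewrite /nfa_reach /= in_set1 => /eqP ->; exists [::]; rewrite /=.
rewrite reach_cat => /reach_split [q1 H1 /IH [vs /andP [H2 /eqP H3]]].
by exists (q1 :: vs); rewrite /= H1 H2 H3 eqxx.
Qed.

Definition goodseq fs (s : seq Q) :=
  if s is q0 :: vs then [&& q0 \in nfa_init A, rp q0 fs vs & last q0 vs \in nfa_final A]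
  else false.

Lemma lang_good fs : nfa_lang A (flatten fs) -> exists s, goodseq fs s.
Proof.
move=> /existsP [q /andP [Hq Hf]].
have [q0 H0 Hr] := reach_split Hq.
have [vs /andP [H1 /eqP H2]] := rp_complete Hr.
by exists (q0 :: vs); rewrite /= H0 H1 H2 Hf.
Qed.

Lemma good_size fs s : goodseq fs s -> size s = (size fs).+1.
Proof. by case: s => // q0 vs /and3P [_ /rp_size E _]; rewrite /= E. Qed.

Lemma loop_pow q w k : q \in @nfa_reach S A [set q] w ->
  q \in @nfa_reach S A [set q] (flatten (nseq k w)).
Proof.
move=> H; elim: k => [|k IH] /=; first by rewrite /nfa_reach /= in_set1.
exact: reach_trans H IH.
Qed.

Definition pump (i j k : nat) (fs : seq (seq S)) : seq S :=
  flatten (take i.+1 fs) ++ flatten (nseq k (flatten (take (j - i) (drop i.+1 fs))))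
  ++ flatten (drop j.+1 fs).

Lemma pump_good fs q0 vs i j k : goodseq fs (q0 :: vs) -> i < j -> j < size fs ->
  nth q0 vs i = nth q0 vs j -> nfa_lang A (pump i j k fs).
Proof.
move=> /and3P [Hi Hr Hf] Hij Hj Heq.
have Es := rp_size Hr.
have Dfs : fs = take i.+1 fs ++ take (j - i) (drop i.+1 fs) ++ drop j.+1 fs.
  have Ed : drop (j - i) (drop i.+1 fs) = drop j.+1 fs by rewrite drop_drop; congr drop; lia.
  by rewrite -Ed !cat_take_drop.
have Dvs : vs = take i.+1 vs ++ take (j - i) (drop i.+1 vs) ++ drop j.+1 vs.
  have Ed : drop (j - i) (drop i.+1 vs) = drop j.+1 vs by rewrite drop_drop; congr drop; lia.
  by rewrite -Ed !cat_take_drop.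
move: Hr Hf; rewrite {1}Dfs {1 2}Dvs rp_cat; last by rewrite !size_take Es.
rewrite rp_cat; last by rewrite !size_take !size_drop Es.
rewrite !last_cat => /and3P [H1 H2 H3] Hf.
have L1 : last q0 (take i.+1 vs) = nth q0 vs i.
  rewrite (last_nth q0) size_takel ?Es; last by lia.
  by rewrite [LHS]/= nth_take.
have L2 : last (nth q0 vs i) (take (j - i) (drop i.+1 vs)) = nth q0 vs j.
  rewrite (last_nth q0) size_takel ?size_drop ?Es; last by lia.
  have -> : j - i = (j - i - 1).+1 by lia.
  by rewrite /= nth_take // nth_drop; congr nth; lia.
rewrite L1 in H2 H3 Hf; rewrite L2 -Heq in H3 Hf.
have S1 := rp_sound H1; rewrite L1 in S1.
have S2 := rp_sound H2; rewrite L2 -Heq in S2.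
have S3 := rp_sound H3.
apply/existsP; exists (last (nth q0 vs i) (drop j.+1 vs)); rewrite Hf andbT.
apply: (subsetP (reach_sub1 _ Hi)); rewrite /pump.
apply: reach_trans S1 _; apply: reach_trans (loop_pow _ S2) S3.
Qed.

End NFA.

Section Gen.
Variable S : finType.

Lemma flatten_single (s : seq S) : flatten [seq [:: g] | g <- s] = s.
Proof. by elim: s => //= a s ->. Qed.

Lemma size_flatten_nseq k (w : seq S) : size (flatten (nseq k w)) = k * size w.
Proof. by elim: k => //= k IH; rewrite size_cat IH mulSn. Qed.

Lemma drop_cat_le (T0 : Type) (s1 s2 : seq T0) n : n <= size s1 -> drop n (s1 ++ s2) = drop n s1 ++ s2.
Proof.
rewrite drop_cat; case: ltnP => // H1 H2.
have -> : n = size s1 by apply/eqP; rewrite eqn_leq H1 H2.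
by rewrite subnn drop0 drop_size.
Qed.

Lemma pump_fs0 (P B Q : seq S) T i j k : T <= size B -> i < j -> j <= T ->
  exists B', pump i j k (P :: rcons [seq [:: g] | g <- take T B] (drop T B ++ Q))
             = P ++ B' ++ Q /\ size B' + (j - i) = size B + k * (j - i).
Proof.
move=> HT Hij HjT.
set tB := take T B.
have HtB : size tB = T by rewrite size_takel.
set ms := [seq [:: g] | g <- tB].
have Hms : size ms = T by rewrite size_map.
exists (take i tB ++ flatten (nseq k (take (j - i) (drop i tB))) ++ drop j tB ++ drop T B).
split.
  rewrite /pump -cats1 /=.
  rewrite takel_cat ?Hms; last by lia.
  rewrite drop_cat_le ?Hms; last by lia.
  rewrite takel_cat ?size_drop ?Hms; last by lia.
  rewrite drop_cat_le ?Hms; last by lia.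
  rewrite /ms -!map_take -!map_drop -map_take !flatten_cat !flatten_single /= cats0.
  by rewrite !catA.
have s1 : size (take i tB) = i by rewrite size_takel // HtB; lia.
have s2 : size (take (j - i) (drop i tB)) = j - i by rewrite size_takel // size_drop HtB; lia.
rewrite !size_cat size_flatten_nseq s1 s2 !size_drop HtB; lia.
Qed.

Lemma pump_sub d i j k (fs gs : seq (seq S)) : pw d fs gs -> sub d (pump i j k fs) (pump i j k gs).
Proof.
move=> H; rewrite /pump; apply: sub_cat; first by apply: sub_flatten; apply: pw_take.
apply: sub_cat; last by apply: sub_flatten; apply: pw_drop.
by apply: sub_nseq; apply: sub_flatten; apply: pw_take; apply: pw_drop.
Qed.

End Gen.

Lemma dc (X : Type) (P : nat -> X -> Prop) (R : nat -> X -> X -> Prop) (x0 : X) :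
  P 0 x0 -> (forall n x, P n x -> exists y, P n.+1 y /\ R n x y) ->
  exists f : nat -> X, f 0 = x0 /\ forall n, P n (f n) /\ R n (f n) (f n.+1).
Proof.
move=> H0 Hs.
have step : forall n (x : {x | P n x}), {y : {y | P n.+1 y} | R n (sval x) (sval y)}.
  move=> n [x Hx]; have /constructive_indefinite_description [y [Hy Hr]] := Hs n x Hx.
  exact: (exist _ (exist _ y Hy) Hr).
pose g := fix g (n : nat) : {x | P n x} :=
  match n return {x | P n x} with 0 => exist _ x0 H0 | n'.+1 => sval (step n' (g n')) end.
exists (fun n => sval (g n)); split => // n; split; first exact: svalP (g n).
exact: svalP (step n (g n)).
Qed.

Lemma inf_pigeon (A : finType) (f : nat -> A) (P : nat -> Prop) :
  (forall N, exists n, N <= n /\ P n) ->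
  exists a, forall N, exists n, [/\ N <= n, P n & f n = a].
Proof.
move=> H; apply: NNPP => Hn.
have H' : forall a, exists N, forall n, N <= n -> P n -> f n <> a.
  move=> a; apply: NNPP => Ha; apply: Hn; exists a => N; apply: NNPP => HN.
  apply: Ha; exists N => n Hn' HP Hf; apply: HN; by exists n.
pose Nf a := sval (constructive_indefinite_description _ (H' a)).
have [n [Hn1 HP]] := H (\max_a Nf a).
apply: (svalP (constructive_indefinite_description _ (H' (f n))) n) => //.
apply: leq_trans Hn1; exact: (leq_bigmax (f n)).
Qed.

Lemma fin_pigeon (A : finType) n (f : 'I_n -> A) : #|A| < n ->
  exists i j : 'I_n, i < j /\ f i = f j.
Proof.
move=> H; apply: NNPP => Hn.
have inj : injective f.
  move=> i j Hij; case: (ltngtP i j) => [lt|gt|eq].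
  - by exfalso; apply: Hn; exists i, j.
  - by exfalso; apply: Hn; exists j, i.
  - exact: val_inj.
by have := leq_card f inj; rewrite card_ord; lia.
Qed.

Lemma pump_good' (S : finType) (A : nfa S) fs s x i j k : goodseq (A:=A) fs s -> i < j -> j < size fs ->
  nth x s i.+1 = nth x s j.+1 -> nfa_lang A (pump i j k fs).
Proof.
case: s => // q0 vs H Hij Hj /= Heq.
have Es : size vs = size fs by move: H => /and3P [_ /rp_size -> _].
apply: (@pump_good S A fs q0 vs i j k H Hij Hj).
by rewrite (set_nth_default x) ?Es ?(ltn_trans Hij Hj) // Heq (set_nth_default q0) // Es.
Qed.

Section Main.
Variables (S : finType) (m d l : nat).
Hypotheses (Hd : 0 < d) (Hf : (m ^ 3)`! %| d) (Hl : 0 < l).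

Definition dchain (E O : nfa S) (c : nat -> seq S) :=
  forall n, sub d (c n) (c n.+1) /\ nfa_lang (if odd n then O else E) (c n).

Lemma PL E O c P B Q :
  #|nfa_state E| <= m -> #|nfa_state O| <= m -> dchain E O c -> c 0 = P ++ B ++ Q ->
  d %| size B ->
  exists c', dchain E O c' /\ exists B', c' 0 = P ++ B' ++ Q /\ (l * d) %| size B'.
Proof.
move=> HE HO Hc H0 HB.
case: (posnP (size B)) => [/size0nil HB0 | HBp].
  by exists c; split => //; exists [::]; split; [rewrite -HB0 | rewrite dvdn0].
set T := m ^ 3.
have HdB : d <= size B := dvdn_leq HBp HB.
have HTd : T <= d := leq_trans (fact_geq T) (dvdn_leq Hd Hf).
have HTB : T <= size B := leq_trans HTd HdB.
pose fs0 := P :: rcons [seq [:: g] | g <- take T B] (drop T B ++ Q).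
have Hfs0 : flatten fs0 = c 0.
  rewrite H0 /fs0 /= -cats1 flatten_cat flatten_single /= cats0.
  by rewrite -{3}(cat_take_drop T B) -!catA.
have Hsz0 : size fs0 = T.+2 by rewrite /= size_rcons size_map size_takel.
pose PF n (fs : seq (seq S)) := flatten fs = c n /\ size fs = T.+2.
have Hstep : forall n fs, PF n fs -> exists gs, PF n.+1 gs /\ pw d fs gs.
  move=> n fs [Hfl Hs]; have Hne : fs != [::] by rewrite -size_eq0 Hs.
  have := (Hc n).1; rewrite -Hfl => /(split_flatten Hne) [gs [Eg Hp]].
  by exists gs; split => //; split => //; rewrite -Hp.1.
have [F [HF0 HF]] := dc (conj Hfs0 Hsz0 : PF 0 fs0) Hstep.
have Fpw : forall n n', n <= n' -> pw d (F n) (F n').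
  move=> n n' /subnK <-; elim: (n' - n) => [|k IH]; first exact: pw_refl.
  by rewrite addSn; apply: pw_trans IH (HF _).2.
have Fl : forall n, nfa_lang (if odd n then O else E) (flatten (F n)).
  by move=> n; rewrite (HF n).1.1; exact: (Hc n).2.
have Fsz : forall n, size (F n) = T.+2 := fun n => (HF n).1.2.
have [[|e0 s0] Hs0] := lang_good (Fl 0) => //.
have [[|o0 s1] Hs1] := lang_good (Fl 1) => //.
pose sf n : (T.+3).-tuple (nfa_state E) :=
  odflt (nseq_tuple T.+3 e0) [pick t : (T.+3).-tuple (nfa_state E) | goodseq (A:=E) (F n) t].
pose tf n : (T.+3).-tuple (nfa_state O) :=
  odflt (nseq_tuple T.+3 o0) [pick t : (T.+3).-tuple (nfa_state O) | goodseq (A:=O) (F n) t].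
have sf_good : forall n, ~~ odd n -> goodseq (A:=E) (F n) (sf n).
  move=> n Hn; have := Fl n; rewrite (negbTE Hn) => /lang_good [s Hs].
  have Hsz : size s == T.+3 by rewrite (good_size Hs) Fsz.
  rewrite /sf; case: pickP => [t Ht | Hnone] //=.
  by have := Hnone (Tuple Hsz); rewrite /= Hs.
have tf_good : forall n, odd n -> goodseq (A:=O) (F n) (tf n).
  move=> n Hn; have := Fl n; rewrite Hn => /lang_good [s Hs].
  have Hsz : size s == T.+3 by rewrite (good_size Hs) Fsz.
  rewrite /tf; case: pickP => [t Ht | Hnone] //=.
  by have := Hnone (Tuple Hsz); rewrite /= Hs.
have evN : forall N, exists n, N <= n /\ ~~ odd n.
  by move=> N; exists (2 * N); rewrite oddM andFb; split => //; lia.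
have odN : forall N, exists n, N <= n /\ odd n.
  by move=> N; exists (2 * N).+1; rewrite /= oddM andFb; split => //; lia.
have [sg Hsg] := @inf_pigeon _ sf (fun n => ~~ odd n) evN.
have [tg Htg] := @inf_pigeon _ tf (fun n => odd n) odN.
pose g (b : 'I_T.+1) := (nth e0 (sf 0) b.+1, nth e0 sg b.+1, nth o0 tg b.+1).
have Hcard : #|{: (nfa_state E * nfa_state E) * nfa_state O}| < T.+1.
  rewrite !card_prod.
  have -> : T = m * m * m by rewrite /T !expnS expn0 muln1 mulnA.
  by rewrite ltnS; apply: leq_mul => //; apply: leq_mul.
have [i [j [Hij [Eg1 Eg2 Eg3]]]] := @fin_pigeon _ _ g Hcard.
pose Pk k n := if k is 0 then n = 0 else
   if odd k then odd n /\ tf n = tg else ~~ odd n /\ sf n = sg.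
have Hkstep : forall k n, Pk k n -> exists n', Pk k.+1 n' /\ n < n'.
  move=> k n _; rewrite /Pk; case: (odd k.+1).
    by have [n' [Hn' Ho Ht]] := Htg n.+1; exists n'.
  by have [n' [Hn' Ho Ht]] := Hsg n.+1; exists n'.
have [ns [Hns0 Hns]] := dc (erefl 0 : Pk 0 0) Hkstep.
have ns_mono : forall k k', k <= k' -> ns k <= ns k'.
  move=> k k' /subnK <-; elim: (k' - k) => [|x IH] //.
  by rewrite addSn; apply: leq_trans IH (ltnW (Hns _).2).
have Hji : 0 < j - i by rewrite subn_gt0.
have HjT : j <= T by rewrite -ltnS ltn_ord.
have Hdiv : (j - i) %| size B.
  apply: dvdn_trans (dvdn_trans Hf HB); apply: dvdn_fact; rewrite Hji /=; lia.
set e := (l - 1) * (size B %/ (j - i)).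
exists (fun k => pump i j e.+1 (F (ns k))).
split.
  move=> k; split.
    by apply: pump_sub; apply: Fpw; apply: ltnW (Hns k).2.
  have HjF : j < size (F (ns k)) by rewrite Fsz; lia.
  case: k HjF => [|k] HjF.
    rewrite /= Hns0; apply: (@pump_good' S E (F 0) (sf 0) e0 i j e.+1 (sf_good 0 isT)) => //.
    by rewrite Fsz; lia.
  have := (Hns k.+1).1; rewrite /Pk; case Hk: (odd k.+1) => [] [Ho Ht].
    by apply: (@pump_good' S O _ _ o0 i j e.+1 (tf_good _ Ho)) => //; rewrite Ht.
  by apply: (@pump_good' S E _ _ e0 i j e.+1 (sf_good _ Ho)) => //; rewrite Ht.
rewrite /= Hns0 HF0.
have [B' [-> HB']] := @pump_fs0 _ P B Q T i j e.+1 HTB Hij HjT.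
exists B'; split => //.
have -> : size B' = l * size B.
  have : e * (j - i) = (l - 1) * size B by rewrite /e -mulnA divnK.
  rewrite mulSn in HB'.
  have : l * size B = size B + (l - 1) * size B by rewrite -{1}(subnK Hl) addn1 mulSn.
  lia.
by rewrite dvdn_mul.
Qed.

Lemma sub_nilE d' (Y : seq S) : sub d' [::] Y -> d' %| size Y.
Proof. by move=> /sub_size [k ->]; rewrite add0n dvdn_mull. Qed.

Lemma OI E O : #|nfa_state E| <= m -> #|nfa_state O| <= m ->
  forall y x X Y c, dchain E O c -> c 0 = X ++ Y -> sub (l * d) x X -> sub d y Y ->
  exists c', dchain E O c' /\ sub (l * d) (x ++ y) (c' 0).
Proof.
move=> HE HO; elim=> [|a y IH] x X Y c Hc H0 HxX HyY.
  have HY := sub_nilE HyY.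
  have [c' [Hc' [B' [E0 HB']]]] := @PL E O c X Y [::] HE HO Hc ltac:(by rewrite cats0) HY.
  exists c'; split => //; rewrite E0 !cats0 -[x]cats0; apply: sub_cat HxX (sub_nil HB').
have [B [Y' [EY HB HyY']]] := sub_consE HyY.
have [c1 [Hc1 [B' [E1 HB']]]] := @PL E O c X B (a :: Y') HE HO Hc ltac:(by rewrite H0 EY) HB.
have Hx' : sub (l * d) (x ++ [:: a]) (X ++ B' ++ [:: a]).
  rewrite catA; apply: sub_cat; last exact: sub_refl.
  by rewrite -[x]cats0; apply: sub_cat HxX (sub_nil HB').
have E1' : c1 0 = (X ++ B' ++ [:: a]) ++ Y' by rewrite E1 -!catA.
have [c' [Hc' Hs]] := IH _ _ _ _ Hc1 E1' Hx' HyY'.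
by exists c'; split => //; rewrite -cat1s catA.
Qed.

Lemma stage E O c : #|nfa_state E| <= m -> #|nfa_state O| <= m -> dchain E O c ->
  exists c', dchain O E c' /\ sub (l * d) (c 0) (c' 0).
Proof.
move=> HE HO Hc.
have Hsh : dchain O E (fun n => c n.+1).
  move=> n; split; first exact: (Hc n.+1).1.
  by have := (Hc n.+1).2; rewrite /=; case: (odd n).
have := @OI O E HO HE (c 0) [::] [::] (c 1) _ Hsh erefl (@sub_nil S _ [::] (dvdn0 _)) (Hc 0).1.
by move=> [c' [H1 H2]]; exists c'.
Qed.

Lemma chain_ld A1 A2 c : #|nfa_state A1| <= m -> #|nfa_state A2| <= m -> dchain A1 A2 c ->
  exists w : nat -> seq S, forall k,
    sub (l * d) (w k) (w k.+1) /\ nfa_lang (if odd k then A2 else A1) (w k).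
Proof.
move=> H1 H2 Hc.
pose Pk k c := dchain (if odd k then A2 else A1) (if odd k then A1 else A2) c.
have Hstep : forall k c, Pk k c -> exists c', Pk k.+1 c' /\ sub (l * d) (c 0) (c' 0).
  move=> k c0; rewrite /Pk /=; case: (odd k) => /= Hc0.
    by have [c' [Hc' Hs]] := stage H2 H1 Hc0; exists c'.
  by have [c' [Hc' Hs]] := stage H1 H2 Hc0; exists c'.
have [C [_ HC]] := dc (Hc : Pk 0 c) Hstep.
exists (fun k => C k 0) => k; split; first exact: (HC k).2.
exact: ((HC k).1 0).2.
Qed.

End Main.


Theorem mainTheorem7 (S : finType) (A1 A2 : nfa S) (m d : nat) :
  #|nfa_state A1| <= m -> #|nfa_state A2| <= m ->
  0 < d -> 2 * (m ^ 3)`! %| d ->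
  (exists I, in_adherence (subword_mod d) (nfa_lang A1) I /\
             in_adherence (subword_mod d) (nfa_lang A2) I) ->
  forall l, 0 < l ->
    exists I, in_adherence (subword_mod (l * d)) (nfa_lang A1) I /\
              in_adherence (subword_mod (l * d)) (nfa_lang A2) I.
Proof.
move=> H1 H2 Hd H2f [I [[[[u0 Hu0] _ _] Ad1] [_ Ad2]]] l Hl.
have Hf : (m ^ 3)`! %| d := dvdn_trans (dvdn_mull 2 (dvdnn _)) H2f.
have get : forall (A : nfa S) v,
    (forall u, I u -> downc (subword_mod d) (fun v => nfa_lang A v /\ I v) u) -> I v ->
    exists v', (I v' /\ nfa_lang A v') /\ sub d v v'.
  move=> A v HA Hv; have [v' [Hl' HI] Hs] := HA v Hv.
  by exists v'; split => //; apply: subword_sub.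
pose Pn n x := I x /\ nfa_lang (if odd n then A2 else A1) x.
have [v0 [[Iv0 Lv0] _]] := get A1 u0 Ad1 Hu0.
have Hstep : forall n x, Pn n x -> exists y, Pn n.+1 y /\ sub d x y.
  move=> n x [Ix _]; rewrite /Pn /=; case: (odd n) => /=.
    by have [y [[Iy Ly] Hs]] := get A1 x Ad1 Ix; exists y.
  by have [y [[Iy Ly] Hs]] := get A2 x Ad2 Ix; exists y.
have [c [_ Hc]] := dc (conj Iv0 Lv0 : Pn 0 v0) Hstep.
have Hdc : dchain d A1 A2 c by move=> n; split; [exact: (Hc n).2 | exact: (Hc n).1.2].
have [w Hw] := chain_ld Hd Hf Hl H1 H2 Hdc.
have wmono : forall k k', k <= k' -> sub (l * d) (w k) (w k').
  move=> k k' /subnK <-; elim: (k' - k) => [|x IH]; first exact: sub_refl.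
  by rewrite addSn; apply: sub_trans IH (Hw _).1.
pose J u := exists k, sub (l * d) u (w k).
have ideal : is_ideal (subword_mod (l * d)) J.
  split.
  - by exists (w 0), 0; apply: sub_refl.
  - by move=> u v /subword_sub Huv [k Hk]; exists k; apply: sub_trans Huv Hk.
  - move=> u v [k1 Hk1] [k2 Hk2]; exists (w (maxn k1 k2)); split.
    + by exists (maxn k1 k2); apply: sub_refl.
    + by apply: sub_subword; apply: sub_trans Hk1 (wmono _ _ (leq_maxl _ _)).
    + by apply: sub_subword; apply: sub_trans Hk2 (wmono _ _ (leq_maxr _ _)).
have adh : forall (b : bool) A, A = (if b then A2 else A1) ->
    in_adherence (subword_mod (l * d)) (nfa_lang A) J.
  move=> b A HA; split => // u [k Hk].
  pose k' := if odd k == b then k else k.+1.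
  have Hk' : odd k' = b.
    rewrite /k'; case: eqP => /= [-> // | H]; move: H; case: (odd k); case: (b) => //=.
  have Hkk' : k <= k' by rewrite /k'; case: eqP.
  exists (w k'); last by apply: sub_subword; apply: sub_trans Hk (wmono _ _ Hkk').
  split; last by exists k'; apply: sub_refl.
  by rewrite HA -Hk'; exact: (Hw k').2.
by exists J; split; [exact: (adh false) | exact: (adh true)].
Qed.
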